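(* Let $R$ be a $\star$-ring and equip the formal power series ring $R[[x]]$ with the involution $\left(\sum_{i\ge0}a_ix^i\right)^\star=\sum_{i\ge0}a_i^\star x^i$. Then $R[[x]]$ is weakly $\star$-clean if and only if $R$ is weakly $\star$-clean.
   Context: Rings are associative with identity. A $\star$-ring is a ring with a map $\star$ satisfying $(x+y)^\star=x^\star+y^\star$, $(xy)^\star=y^\star x^\star$, $(x^\star)^\star=x$. A projection is $p$ with $p^2=p=p^\star$; $P(R)$ is the set of projections, $U(R)$ the units. An element $x$ is weakly $\star$-clean if $x=u+p$ or $x=u-p$ with $u\in U(R)$, $p\in P(R)$; $R$ is weakly $\star$-clean if all its elements are. *)

(* Defs.v *)
From HB Require Import structures.
From mathcomp Require Import all_boot all_order all_algebra.
Set Implicit Arguments. Unset Strict Implicit. Unset Printing Implicit Defensive.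
Import GRing.Theory.
Local Open Scope ring_scope.

Definition is_star_ring (R : pzRingType) (s : R -> R) : Prop :=
  [/\ forall x y : R, s (x + y) = s x + s y,
      forall x y : R, s (x * y) = s y * s x
    & forall x : R, s (s x) = x].

Definition is_unit_op (T : Type) (mul : T -> T -> T) (one : T) (u : T) : Prop :=
  exists v, mul u v = one /\ mul v u = one.

Definition is_projection_op (T : Type) (mul : T -> T -> T) (star : T -> T)
  (p : T) : Prop := mul p p = p /\ star p = p.

Definition weakly_star_clean_elt_op (T : Type) (add mul : T -> T -> T)
  (opp : T -> T) (one : T) (star : T -> T) (x : T) : Prop :=
  exists u p, is_unit_op mul one u /\ is_projection_op mul star p /\
    (x = add u p \/ x = add u (opp p)).

Definition weakly_star_clean_op (T : Type) (add mul : T -> T -> T)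
  (opp : T -> T) (one : T) (star : T -> T) : Prop :=
  forall x : T, weakly_star_clean_elt_op add mul opp one star x.

Definition weakly_star_clean (R : pzRingType) (s : R -> R) : Prop :=
  weakly_star_clean_op (fun x y : R => x + y) (fun x y : R => x * y)
    (fun x : R => - x) (1 : R) s.

Definition fps (R : pzRingType) := nat -> R.

Definition fps_add (R : pzRingType) (f g : fps R) : fps R := fun n => f n + g n.
Definition fps_opp (R : pzRingType) (f : fps R) : fps R := fun n => - f n.
Definition fps_mul (R : pzRingType) (f g : fps R) : fps R :=
  fun n => \sum_(i < n.+1) f i * g (n - i)%N.
Definition fps_one (R : pzRingType) : fps R := fun n => if n == 0%N then 1 else 0.
Definition fps_star (R : pzRingType) (s : R -> R) (f : fps R) : fps R :=
  fun n => s (f n).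

Definition fps_weakly_star_clean (R : pzRingType) (s : R -> R) : Prop :=
  weakly_star_clean_op (@fps_add R) (@fps_mul R) (@fps_opp R) (@fps_one R)
    (fps_star s).

(* Main.v *)
Require Import Defs.
From mathcomp Require Import all_boot all_order all_algebra.
From Stdlib Require Import FunctionalExtensionality.
Set Implicit Arguments. Unset Strict Implicit. Unset Printing Implicit Defensive.
Import GRing.Theory.
Local Open Scope ring_scope.


Lemma fps_mulA {R : pzRingType} (f g h : fps R) :
  fps_mul (fps_mul f g) h = fps_mul f (fps_mul g h).
Proof.
apply: functional_extensionality => n; rewrite /fps_mul.
transitivity (\sum_(i < n.+1) \sum_(j < n.+1)
   (if (j < i.+1)%N then f j * g (i - j)%N * h (n - i)%N else 0)).
  apply: eq_bigr => i _; rewrite mulr_suml (big_ord_widen _ (fun j => f j * g (i - j)%N * h (n - i)%N) (ltn_ord i)).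
  by rewrite big_mkcond.
rewrite exchange_big /=; apply: eq_bigr => j _.
rewrite mulr_sumr -big_mkcond /=.
rewrite -(big_mkord (fun i => (j < i.+1)%N) (fun i => f j * g (i - j)%N * h (n - i)%N)).
have -> : \sum_(0 <= i < n.+1 | (j < i.+1)%N) f j * g (i - j)%N * h (n - i)%N
   = \sum_(j <= i < n.+1) f j * g (i - j)%N * h (n - i)%N.
  by rewrite [RHS]big_geq_mkord big_mkord; apply: eq_bigl => i /=; rewrite ltnS; case: leq.
rewrite (big_addn 0 n.+1 j).
have hj : (n.+1 - j = (n - j).+1)%N by rewrite subSn // -ltnS.
rewrite hj big_mkord; apply: eq_bigr => k _.
by rewrite addnK mulrA addnC subnDA.
Qed.

Fixpoint build {R : pzRingType} (F : nat -> (nat -> R) -> R) (n : nat) : seq R :=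
  match n with
  | 0 => [:: F 0%N (fun _ => 0)]
  | m.+1 => let s := build F m in rcons s (F m.+1 (fun k => nth 0 s k))
  end.
Definition recf {R : pzRingType} F (n : nat) : R := nth 0 (build F n) n.

Lemma size_build {R : pzRingType} (F : nat -> (nat -> R) -> R) n : size (build F n) = n.+1.
Proof. by elim: n => //= n IH; rewrite size_rcons IH. Qed.

Lemma nth_build {R : pzRingType} (F : nat -> (nat -> R) -> R) n k : (k <= n)%N -> nth 0 (build F n) k = recf F k.
Proof.
elim: n => [|n IH]; first by rewrite leqn0 => /eqP ->.
rewrite leq_eqVlt => /orP [/eqP -> //|]; rewrite ltnS => hk /=.
by rewrite nth_rcons size_build ltnS hk IH.
Qed.

Lemma recf_eq {R : pzRingType} (F : nat -> (nat -> R) -> R) :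
  (forall n (p q : nat -> R), (forall k, (k < n)%N -> p k = q k) -> F n p = F n q) ->
  forall n, recf F n = F n (recf F).
Proof.
move=> HF [|n]; rewrite /recf /=; first by apply: HF.
rewrite nth_rcons size_build ltnn eqxx; apply: HF => k hk.
by rewrite nth_build // -ltnS.
Qed.

Lemma fps_rinv {R : pzRingType} (f : fps R) v : f 0%N * v = 1 ->
  exists g, fps_mul f g = fps_one R.
Proof.
move=> fv.
pose F := fun n (p : nat -> R) => if n is m.+1 then
   - (v * \sum_(i < m.+1) f i.+1 * p (m - i)%N) else v.
have HF : forall n (p q : nat -> R), (forall k, (k < n)%N -> p k = q k) -> F n p = F n q.
  move=> [|m] p q H //=; congr (- (v * _)); apply: eq_bigr => i _.
  by rewrite H // ltnS leq_subr.
exists (recf F); apply: functional_extensionality => n; rewrite /fps_mul /fps_one.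
case: n => [|m]; first by rewrite big_ord1 recf_eq //= subn0.
rewrite big_ord_recl /= (recf_eq HF (m.+1)) /= mulrN mulrA fv mul1r.
rewrite addrC; apply/eqP; rewrite subr_eq0; apply/eqP; apply: eq_bigr => i _.
by rewrite /bump /= add1n subSS.
Qed.

Lemma fps_linv {R : pzRingType} (f : fps R) v : v * f 0%N = 1 ->
  exists h, fps_mul h f = fps_one R.
Proof.
move=> fv.
pose F := fun n (p : nat -> R) => if n is m.+1 then
   - ((\sum_(i < m.+1) p i * f (m.+1 - i)%N) * v) else v.
have HF : forall n (p q : nat -> R), (forall k, (k < n)%N -> p k = q k) -> F n p = F n q.
  move=> [|m] p q H //=; congr (- (_ * v)); apply: eq_bigr => i _.
  by rewrite H.
exists (recf F); apply: functional_extensionality => n; rewrite /fps_mul /fps_one.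
case: n => [|m]; first by rewrite big_ord1 recf_eq //= subn0.
rewrite big_ord_recr /= (recf_eq HF (m.+1)) /= subnn mulNr -mulrA fv mulr1.
by rewrite subrr.
Qed.

Lemma fps_mul1r {R : pzRingType} (p : fps R) : fps_mul (fps_one R) p = p.
Proof.
apply: functional_extensionality => n; rewrite /fps_mul big_ord_recl /= subn0 mul1r.
by rewrite big1 ?addr0 // => i _; rewrite /fps_one /= mul0r.
Qed.

Lemma fps_mulr1 {R : pzRingType} (p : fps R) : fps_mul p (fps_one R) = p.
Proof.
apply: functional_extensionality => n; rewrite /fps_mul big_ord_recr /= subnn mulr1.
rewrite big1 ?add0r // => i _; rewrite /fps_one.
by rewrite subn_eq0 leqNgt ltn_ord /= mulr0.
Qed.

Lemma fps_unit {R : pzRingType} (f : fps R) v : f 0%N * v = 1 -> v * f 0%N = 1 ->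
  is_unit_op (@fps_mul R) (fps_one R) f.
Proof.
move=> h1 h2; have [g Hg] := fps_rinv h1; have [h Hh] := fps_linv h2.
have hg : h = g by rewrite -(fps_mulr1 h) -Hg -fps_mulA Hh fps_mul1r.
by exists g; split => //; rewrite -hg.
Qed.

Definition cst {R : pzRingType} (a : R) : fps R := fun n => if n == 0%N then a else 0.

Lemma fps_mul_cst {R : pzRingType} (a b : R) : fps_mul (cst a) (cst b) = cst (a * b).
Proof.
apply: functional_extensionality => n; rewrite /fps_mul big_ord_recl /= subn0.
rewrite big1 ?addr0 => [|i _]; last by rewrite /cst /= mul0r.
by rewrite /cst /=; case: (n == 0%N); rewrite ?mulr0.
Qed.

Theorem proposition4p9 (R : pzRingType) (s : R -> R) :
  is_star_ring s ->
  (fps_weakly_star_clean s <-> weakly_star_clean s).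
Proof.
move=> [sD sM sK].
have s0 : s 0 = 0.
  by have := sD 0 0; rewrite addr0 => h; apply: (addrI (s 0)); rewrite addr0 -h.
split.
- move=> H a; have [U [P [[V [UV VU]] [[PP Ps] E]]]] := H (cst a).
  exists (U 0%N), (P 0%N); split; [|split].
  + exists (V 0%N); split.
      by have := congr1 (fun F => F 0%N) UV; rewrite /fps_mul big_ord1.
    by have := congr1 (fun F => F 0%N) VU; rewrite /fps_mul big_ord1.
  + split; first by have := congr1 (fun F => F 0%N) PP; rewrite /fps_mul big_ord1.
    by have := congr1 (fun F => F 0%N) Ps.
  + by case: E => [E|E]; [left|right]; have := congr1 (fun F => F 0%N) E.
- move=> H f; have [u [p [[v [uv vu]] [[pp ps] E]]]] := H (f 0%N).
  have Pp : is_projection_op (@fps_mul R) (fps_star s) (cst p).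
    split; first by rewrite fps_mul_cst pp.
    apply: functional_extensionality => n; rewrite /fps_star /cst.
    by case: (n == 0%N).
  case: E => E.
  + exists (fps_add f (fps_opp (cst p))), (cst p); split; last split => //.
      by apply: (@fps_unit _ _ v); rewrite /fps_add /fps_opp /cst /= E addrK.
    left; apply: functional_extensionality => n.
    by rewrite /fps_add /fps_opp subrK.
  + exists (fps_add f (cst p)), (cst p); split; last split => //.
      by apply: (@fps_unit _ _ v); rewrite /fps_add /cst /= E subrK.
    right; apply: functional_extensionality => n.
    by rewrite /fps_add /fps_opp addrK.
Qed.
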